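(* Let $d\in\mathbb{Z}^+$, let $A,C_0\subseteq\mathbb{R}^2$ and $B_0\subseteq A\setminus C_0$. Let $B\subseteq A$ with $|B|=\binom{d+2}{2}-3$ satisfy: (i) $\dim\psi_d(B)=\binom{d+2}{2}-4$; (ii) $B\supseteq B_0$; (iii) $B\cap C_0=B\setminus B_0$; (iv) for all $(e,D)\in I(B,C_0)$, $\max\{\tau_e(B,D),\mu_e(B,D)\}<\binom{d+2}{2}$; (v) for all $(e,D)\in(\{1,\dots,d-1\}\times\mathcal{P}(B))\setminus I(B,C_0)$ with $\alpha_e(D)\ge0$, we have $\gamma_e(B,D)<\binom{d+2}{2}-\binom{d-e+2}{2}$ and $\beta_e(B,D)<0$. Then $B\in\mathcal{N}_d(A,B_0,C_0)$.
   Context: For $k\in\mathbb{Z}^+$, a curve of degree $k$ is the zero set in $\mathbb{R}^2$ of a polynomial in $\mathbb{R}[x,y]$ of degree exactly $k$; $\mathcal{C}_k$ is the family of such curves. For $k\in\mathbb{Z}^+$ let $I_k=\{(i,j)\in\mathbb{Z}_{\ge 0}^2: 1\le i+j\le k\}$ and $\psi_k:\mathbb{R}^2\to\mathbb{R}^{\binom{k+2}{2}-1}$, $\psi_k(a_1,a_2)=(a_1^ia_2^j)_{(i,j)\in I_k}$. $\mathrm{Fl}(S)$ is the affine hull of $S$ ($\mathrm{Fl}(\emptyset)=\emptyset$); $\dim S:=\dim\mathrm{Fl}(S)$, $\dim\emptyset=-1$. $\mathcal{P}(X)$ is the power set. With $d$ fixed, for $e\in\{1,\dots,d-1\}$, finite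 $B\subseteq\mathbb{R}^2$ and $D\subseteq B$: $V_e(D):=\mathrm{Fl}(\psi_e(D))$; $V_d(B):=\mathrm{Fl}(\psi_d(B))$; $W_e(B,D):=\mathrm{Fl}\big(\psi_{d-e}(B\setminus\psi_e^{-1}(V_e(D)))\big)$; $\alpha_e(D):=\binom{e+2}{2}-2-\dim V_e(D)$; $\beta_e(B,D):=\binom{d-e+2}{2}-3-\dim W_e(B,D)$; $\gamma_e(B,D):=|V_e(D)\cap\psi_e(B)|$; $\mu_e(B,D):=0$ if $\alpha_e(D)<0$, else $\mu_e(B,D):=\alpha_e(D)+\gamma_e(B,D)+\binom{d-e+2}{2}$; $\tau_e(B,D):=0$ if $\min\{\alpha_e(D),\beta_e(B,D)\}<0$ or $\gamma_e(B,D)>\binom{d+2}{2}-\binom{d-e+2}{2}-1$; $:=\alpha_e(D)+\beta_e(B,D)+|B|+2$ if $\min\{\alpha_e(D),\beta_e(B,D)\}\ge0$ and $\gamma_e(B,D)=\binom{d+2}{2}-\binom{d-e+2}{2}-1$; $:=\alpha_e(D)+\beta_e(B,D)+|B|+3$ if $\min\{\alpha_e(D),\beta_e(B,D)\}\ge0$ and $\gamma_e(B,D)<\binom{d+2}{2}-\binom{d-e+2}{2}-1$; $U_e(B,D):=\psi_d^{-1}(V_d(B))$ if $\alpha_e(D)<0$; $:=\psi_d^{-1}(V_d(B))\cup\psi_e^{-1}(V_e(D))$ if $\beta_e(B,D)<0\le\alpha_e(D)$; $:=\psi_d^{-1}(V_d(B))\cup\psi_e^{-1}(V_e(D))\cup\psi_{d-e}^{-1}(W_e(B,D))$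 if $\alpha_e(D),\beta_e(B,D)\ge0$; $I(B,C):=\{(f,E)\in\{1,\dots,d-1\}\times\mathcal{P}(B): C\not\subseteq U_f(B,E)\}$. $\mathcal{N}_d(A)$ is the family of $B\subseteq A$ with $|B|=\binom{d+2}{2}-3$ such that: (a) $\dim\psi_d(B)=\binom{d+2}{2}-4$; (b) for all $e\in\{1,\dots,d-1\}$ and $C\in\mathcal{C}_e$, $|B\cap C|<\binom{d+2}{2}-\binom{d-e+2}{2}$; (c) for all $e\in\{1,\dots,d-1\}$ and $C\in\mathcal{C}_e$ with $|B\cap C|=\binom{d+2}{2}-\binom{d-e+2}{2}-1$, $\dim\psi_{d-e}(B\setminus C)=\binom{d-e+2}{2}-3$; (d) for all $e\in\{1,\dots,d-1\}$ and $C\in\mathcal{C}_e$ with $|B\cap C|<\binom{d+2}{2}-\binom{d-e+2}{2}-1$, $\dim\psi_{d-e}(B\setminus C)>\binom{d-e+2}{2}-3$. Finally $\mathcal{N}_d(A,B_0,C_0):=\{E\in\mathcal{N}_d(A): B_0\subseteq E\text{ and }E\cap C_0=E\setminus B_0\}$. *)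

(* Defs.v *)
From HB Require Import structures.
From mathcomp Require Import all_boot all_order all_algebra.
From mathcomp Require Import finmap.
From mathcomp Require Import mpoly.
From mathcomp Require Import reals.
Set Implicit Arguments.
Unset Strict Implicit.
Unset Printing Implicit Defensive.
Import Order.TTheory GRing.Theory Num.Theory.
Local Open Scope ring_scope.


Section Defs.
Variable R : realType.

Definition pt := (R * R)%type.

Definition nb (k : nat) : int := ('C(k.+2, 2))%:Z.

Definition Ik (k : nat) := {p : 'I_k.+1 * 'I_k.+1 | (1 <= p.1 + p.2 <= k)%N}.

(* R^{I_k} ~ R^{binom(k+2,2)-1} *)
Definition Vec (k : nat) := {ffun Ik k -> R^o}.

Definition psi (k : nat) (a : pt) : Vec k :=
  [ffun p : Ik k => (a.1 ^+ (val p).1 * a.2 ^+ (val p).2 : R^o)].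

Definition in_Fl (k : nat) (S : seq (Vec k)) (v : Vec k) : bool :=
  if S is s0 :: _ then (v - s0) \in <<[seq s - s0 | s <- S]>>%VS else false.

Definition dimFl (k : nat) (S : seq (Vec k)) : int :=
  if S is s0 :: _ then (\dim <<[seq s - s0 | s <- S]>>%VS)%:Z else (-1)%R.

Definition psis (k : nat) (X : {fset pt}) : seq (Vec k) :=
  [seq psi k x | x <- (X : seq pt)].

Variable d : nat.

Definition inV (e : nat) (D : {fset pt}) (p : pt) : bool :=
  in_Fl (psis e D) (psi e p).
Definition inVd (B : {fset pt}) (p : pt) : bool :=
  in_Fl (psis d B) (psi d p).
Definition Bout (e : nat) (B D : {fset pt}) : {fset pt} :=
  [fset b in B | ~~ inV e D b]%fset.
Definition inW (e : nat) (B D : {fset pt}) (p : pt) : bool :=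
  in_Fl (psis (d - e) (Bout e B D)) (psi (d - e) p).

Definition alpha (e : nat) (D : {fset pt}) : int :=
  nb e - 2 - dimFl (psis e D).
Definition beta (e : nat) (B D : {fset pt}) : int :=
  nb (d - e) - 3 - dimFl (psis (d - e) (Bout e B D)).
Definition gamma (e : nat) (B D : {fset pt}) : int :=
  (#|` [fset v in [fset psi e b | b in B]%fset | in_Fl (psis e D) v]%fset |)%:Z.

Definition mu (e : nat) (B D : {fset pt}) : int :=
  if alpha e D < 0 then 0 else alpha e D + gamma e B D + nb (d - e).

Definition tau (e : nat) (B D : {fset pt}) : int :=
  if (Num.min (alpha e D) (beta e B D) < 0)
     || (gamma e B D > nb d - nb (d - e) - 1) then 0
  else if gamma e B D == nb d - nb (d - e) - 1 then
    alpha e D + beta e B D + (#|` B|)%:Z + 2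
  else alpha e D + beta e B D + (#|` B|)%:Z + 3.

Definition inU (e : nat) (B D : {fset pt}) (p : pt) : bool :=
  if alpha e D < 0 then inVd B p
  else if beta e B D < 0 then inVd B p || inV e D p
  else [|| inVd B p, inV e D p | inW e B D p].

Definition inI (B : {fset pt}) (C : pt -> Prop) (f : nat) (E : {fset pt}) : Prop :=
  [/\ (1 <= f <= d - 1)%N, (E `<=` B)%fset & exists c, C c /\ ~~ inU f B E c].

Definition ev2 (p : pt) : 'I_2 -> R := fun i => if val i == 0%N then p.1 else p.2.

Definition capZ (X : {fset pt}) (P : {mpoly R[2]}) : {fset pt} :=
  [fset x in X | P.@[ev2 x] == 0]%fset.
Definition diffZ (X : {fset pt}) (P : {mpoly R[2]}) : {fset pt} :=
  [fset x in X | P.@[ev2 x] != 0]%fset.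

(* curves of degree exactly e: zero sets of P with total degree e,
   i.e. msize P = e.+1 *)
Definition Nd (A : pt -> Prop) (B : {fset pt}) : Prop :=
  [/\ (forall b, b \in B -> A b),
      (#|` B|)%:Z = nb d - 3,
      dimFl (psis d B) = nb d - 4 &
      forall (e : nat) (P : {mpoly R[2]}), (1 <= e <= d - 1)%N -> msize P = e.+1 ->
        [/\ (#|` capZ B P|)%:Z < nb d - nb (d - e),
            (#|` capZ B P|)%:Z = nb d - nb (d - e) - 1 ->
              dimFl (psis (d - e) (diffZ B P)) = nb (d - e) - 3 &
            (#|` capZ B P|)%:Z < nb d - nb (d - e) - 1 ->
              dimFl (psis (d - e) (diffZ B P)) > nb (d - e) - 3]].

Definition Nd3 (A : pt -> Prop) (B0 C0 : pt -> Prop) (E : {fset pt}) : Prop :=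
  [/\ Nd A E, (forall x, B0 x -> x \in E) &
      forall x, x \in E -> (C0 x <-> ~ B0 x)].

End Defs.

(* Main.v *)
Require Import Defs.
From HB Require Import structures.
From mathcomp Require Import all_boot all_order all_algebra.
From mathcomp Require Import finmap.
From mathcomp Require Import mpoly.
From mathcomp Require Import reals.
From mathcomp Require Import zify ring lra.
From Stdlib Require Import Classical.
Import Order.TTheory GRing.Theory Num.Theory.
Local Open Scope ring_scope.

Module Helpers.
Set Implicit Arguments.
Lemma sum_le_cnt n k : (\sum_(j < n) (j <= k : nat) = minn n k.+1)%N.
Proof.
elim: n => [|n IH]; first by rewrite big_ord0.
rewrite big_ord_recr /= IH.
case: (leqP n k) => h; lia.
Qed.

Lemma card_le e : #|[pred p : 'I_e.+1 * 'I_e.+1 | (p.1 + p.2 <= e)%N]| = 'C(e.+2, 2).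
Proof.
rewrite -sum1_card big_mkcond /=.
rewrite (eq_bigr (fun p : 'I_e.+1 * 'I_e.+1 => (p.2 <= e - p.1 : nat))%N); last first.
  move=> [i j] _; rewrite inE /=; have := ltn_ord i; have := ltn_ord j.
  move=> hj hi; have -> : (j <= e - i)%N = (i + j <= e)%N by apply/idP/idP; lia.
  by case: ifP.
transitivity (\sum_(i < e.+1) \sum_(j < e.+1) (j <= e - i : nat))%N; first by rewrite pair_bigA.
transitivity (\sum_(i < e.+1) (e - i).+1)%N.
  apply: eq_bigr => i _.
  by rewrite sum_le_cnt; have := ltn_ord i; lia.
rewrite -(big_mkord xpredT (fun i => (e - i).+1)) big_nat_rev /=.
rewrite (eq_big_nat _ _ (F2 := fun i => i.+1)); last by move=> i hi; lia.
by rewrite -triangular_sum [RHS]big_nat_recl.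
Qed.

Lemma card_Ik e : (#|{: Ik e}| = 'C(e.+2, 2) - 1)%N.
Proof.
rewrite card_sig -card_le [in RHS](cardD1 (ord0, ord0)) inE /= add1n subn1 /=.
apply: eq_card => -[a b]; rewrite !inE /= xpair_eqE.
have -> : (a == ord0) = (val a == 0%N) by [].
have -> : (b == ord0) = (val b == 0%N) by [].
case: (a + b <= e)%N; rewrite ?andbT ?andbF //.
by rewrite addn_gt0 !lt0n negb_and.
Qed.

Section Aff.
Variables (R : realType) (e : nat) (P : {mpoly R[2]}).
Hypothesis he : (0 < e)%N.
Hypothesis hP : msize P = e.+1.

Lemma dimVec : \dim (fullv : {vspace Vec R e}) = #|{: Ik e}|.
Proof. by rewrite dimvf /dim /= muln1. Qed.

Let i0 : 'I_2 := ord0.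
Let i1 : 'I_2 := ord_max.

Lemma lt1e : (1 < e.+1)%N. Proof. by rewrite ltnS. Qed.
Lemma lt0e : (0 < e.+1)%N. Proof. by []. Qed.
Definition o1 : 'I_e.+1 := Ordinal lt1e.
Definition o0 : 'I_e.+1 := Ordinal lt0e.
Lemma p10P : (1 <= (o1, o0).1 + (o1, o0).2 <= e)%N.
Proof. by rewrite /= addn0 he. Qed.
Lemma p01P : (1 <= (o0, o1).1 + (o0, o1).2 <= e)%N.
Proof. by rewrite /= he. Qed.
Definition p10 : Ik e := exist _ (o1, o0) p10P.
Definition p01 : Ik e := exist _ (o0, o1) p01P.

Lemma psi_inj : injective (psi (R:=R) e).
Proof.
move=> [x1 x2] [y1 y2] h.
have h1 := congr1 (fun f : Vec R e => f p10) h.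
have h2 := congr1 (fun f : Vec R e => f p01) h.
move: h1 h2; rewrite /= !ffunE /= !expr1 !expr0 mulr1 mulr1 !mul1r => -> -> //.
Qed.

Definition idx (m : 'X_{1..2}) : Ik e :=
  insubd p10 (inord (m i0), inord (m i1)).

Lemma mdeg2 (m : 'X_{1..2}) : mdeg m = (m i0 + m i1)%N.
rewrite mdegE !big_ord_recl big_ord0 addn0 /i0 /i1.
by congr (m _ + m _)%N; apply/val_inj.
Qed.

Lemma idx_val m : m \in msupp P -> m != 0%MM ->
  (val (val (idx m)).1 = m i0 /\ val (val (idx m)).2 = m i1).
Proof.
move=> hm hm0.
have hlt := msize_mdeg_lt hm; rewrite hP mdeg2 in hlt.
have hne : mdeg m != 0%N by rewrite mdeg_eq0.
rewrite mdeg2 in hne.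
have h0 : (m i0 < e.+1)%N by lia.
have h1 : (m i1 < e.+1)%N by lia.
rewrite /idx insubdK /=.
  by rewrite !(@inordK e).
by rewrite unfold_in /= !(@inordK e) //; lia.
Qed.

Lemma idx_inj m m' : m \in msupp P -> m != 0%MM -> m' \in msupp P -> m' != 0%MM ->
  idx m = idx m' -> m = m'.
Proof.
move=> h1 h2 h3 h4 heq.
have [a b] := @idx_val m h1 h2; have [a' b'] := @idx_val m' h3 h4.
apply/mnmP => i.
have : i = i0 \/ i = i1.
  by case: i => [[|[|k]] hk] //; [left|right]; apply: val_inj.
by case=> ->; [rewrite -a -a' heq | rewrite -b -b' heq].
Qed.

Definition F (v : Vec R e) : R :=
  \sum_(m <- msupp P) P@_m * (if m == 0%MM then 1 else v (idx m)).
Definition L (v : Vec R e) : R :=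
  \sum_(m <- msupp P) P@_m * (if m == 0%MM then 0 else v (idx m)).

Lemma F_psi x : F (psi e x) = P.@[ev2 x].
Proof.
rewrite mevalE; apply: eq_big_seq => m hm.
case: eqP => [->|/eqP hm0].
  by rewrite big1 // => i _; rewrite mnm0E expr0.
have [a b] := @idx_val m hm hm0.
rewrite ffunE !big_ord_recl big_ord0 mulr1 /ev2 /=.
congr (_ * (_ ^+ _ * _ ^+ _)); first exact: a.
by rewrite b; congr (m _); apply: val_inj.
Qed.

Lemma FL v w : F v = F w + L (v - w).
Proof.
rewrite /F /L -big_split /=; apply: eq_bigr => m _.
case: eqP => _; rewrite ?ffunE; ring.
Qed.

Lemma L0 : L 0 = 0.
Proof. by rewrite /L big1 // => m _; case: eqP; rewrite ?ffunE mulr0. Qed.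

Lemma LD u v : L (u + v) = L u + L v.
Proof.
rewrite /L -big_split /=; apply: eq_bigr => m _.
case: eqP => _; rewrite ?ffunE; ring.
Qed.

Lemma LZ a u : L (a *: u) = a * L u.
Proof.
rewrite /L mulr_sumr; apply: eq_bigr => m _.
case: eqP => _; rewrite ?ffunE ?mulr0 //; exact: mulrCA.
Qed.

Lemma L_span (X : seq (Vec R e)) u :
  (forall x, x \in X -> L x = 0) -> u \in <<X>>%VS -> L u = 0.
Proof.
move=> hX hu.
have := coord_span (X := in_tuple X) hu => ->.
rewrite (big_morph L LD L0) big1 // => i _.
by rewrite LZ hX ?mulr0 // mem_nth.
Qed.

Lemma inFl_zero (s : seq (pt R)) b :
  (forall y, y \in s -> P.@[ev2 y] = 0) ->
  in_Fl [seq psi e x | x <- s] (psi e b) -> P.@[ev2 b] = 0.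
Proof.
case: s => [|y0 s] //= hz hin.
rewrite -F_psi (FL _ (psi e y0)) F_psi hz ?mem_head // add0r.
apply: (L_span _ _ hin) => x; rewrite inE => /orP [/eqP ->|/mapP [v /mapP [y hy ->] ->]].
  by rewrite subrr L0.
have := FL (psi e y) (psi e y0).
by rewrite !F_psi !hz ?mem_head ?inE ?hy ?orbT // add0r => <-.
Qed.

Lemma exists_nonconst : exists2 m, m \in msupp P & m != 0%MM.
Proof.
have : has (fun m : 'X_{1..2} => m != 0%MM) (msupp P).
  apply/negPn/negP => /hasPn h.
  have : (msize P <= 1)%N.
    rewrite msizeE; apply/bigmax_leqP_seq => m hm _.
    by move: (h m hm); rewrite negbK => /eqP ->; rewrite mdeg0.
  by rewrite hP ltnS leqn0; lia.
by case/hasP => m hm hm0; exists m.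
Qed.

Lemma dim_hyper (s : seq (pt R)) :
  (forall y, y \in s -> P.@[ev2 y] = 0) ->
  dimFl [seq psi e x | x <- s] <= nb e - 2.
Proof.
have hC : (0 < 'C(e.+2, 2))%N by rewrite bin_gt0.
case: s => [|y0 s] hz /=.
  rewrite /nb; lia.
set W := <<_>>%VS.
have [m hm hm0] := exists_nonconst.
have hW : W != fullv.
  apply/negP => /eqP hWf.
  pose u : Vec R e := [ffun q => ((q == idx m)%:R : R^o)].
  have hu : u \in W by rewrite hWf memvf.
  have : L u = 0.
    apply: (L_span _ _ hu) => x; rewrite inE => /orP [/eqP ->|/mapP [v /mapP [y hy ->] ->]].
      by rewrite subrr L0.
    have := FL (psi e y) (psi e y0).
    by rewrite !F_psi !hz ?mem_head ?inE ?hy ?orbT // add0r => <-.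
  rewrite /L (bigD1_seq m) ?msupp_uniq //= (negbTE hm0) /u ffunE eqxx mulr1.
  rewrite big1_seq ?addr0; last first.
    move=> m' /andP [hne hm']; case: eqP => [_|/eqP hm'0]; first by rewrite mulr0.
    rewrite ffunE; have -> : (idx m' == idx m) = false.
      apply/negbTE/eqP => /(@idx_inj m' m hm' hm'0 hm hm0) /eqP.
      by rewrite (negbTE hne).
    by rewrite mulr0.
  by move=> h0; move: hm; rewrite mcoeff_msupp h0 eqxx.
have := dimv_leqif_eq (subvf W).
rewrite dimVec card_Ik => -[hle heq].
have hlt : (\dim W < 'C(e.+2, 2) - 1)%N by rewrite ltn_neqAle heq hW.
rewrite /nb; lia.
Qed.

End Aff.

Lemma in_Fl_mem (R : realType) k (S : seq (Vec R k)) v : v \in S -> in_Fl S v.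
Proof.
case: S => [|s0 S] // hv; apply: memv_span; exact: (map_f (fun s => s - s0) hv).
Qed.

Lemma dimFl_le (R : realType) k (S : seq (Vec R k)) : dimFl S <= (size S)%:Z - 1.
Proof.
case: S => [|s0 S] /=; first by [].
rewrite subrr span_cons.
have h1 := dimv_add_leqif <[0]>%VS <<[seq s - s0 | s <- S]>>%VS.
have h2 := dim_span [seq s - s0 | s <- S].
rewrite dim_vline eqxx size_map in h1 h2.
case: h1 => h1 _.
rewrite /= add0n in h1. have h3 := leq_trans h1 h2. have -> : ((size S).+1%:Z - 1 = (size S)%:Z :> int) by lia. by rewrite lez_nat.
Qed.

Lemma size_psis (R : realType) k (X : {fset pt R}) : size (psis k X) = #|` X|.
Proof. by rewrite size_map cardfE. Qed.

Section Main.
Variables (R : realType) (e : nat) (P : {mpoly R[2]}) (B : {fset pt R}).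
Hypothesis he : (0 < e)%N.
Hypothesis hP : msize P = e.+1.

Lemma inV_iff b : b \in B -> inV e (capZ B P) b = (P.@[ev2 b] == 0).
Proof.
move=> hb; rewrite /inV /psis; apply/idP/idP.
  move=> h; apply/eqP; apply: (inFl_zero he hP _ _ _ h) => y hy.
  have : y \in capZ B P := hy.
  by rewrite !inE => /andP [_ /eqP].
move=> h; apply: in_Fl_mem; apply/mapP; exists b => //.
by rewrite !inE hb h.
Qed.

Lemma Bout_eq : Bout e B (capZ B P) = diffZ B P.
Proof.
apply/fsetP => b; rewrite !inE; case hb: (b \in B) => //=.
by rewrite inV_iff.
Qed.

Lemma gamma_eq : gamma e B (capZ B P) = (#|` capZ B P|)%:Z.
Proof.
rewrite /gamma.
have -> : [fset v in [fset psi e b | b in B]%fset | in_Fl (psis e (capZ B P)) v]%fset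
          = [fset psi e b | b in capZ B P]%fset.
  apply/fsetP => v; rewrite !inE; apply/idP/idP.
    move=> /andP [/imfsetP [b /= hb ->] h].
    apply/imfsetP; exists b => //.
    move: h; rewrite -/(inV e (capZ B P) b) inV_iff // => h.
    by rewrite !inE hb h.
  move=> /imfsetP [b /= hb ->].
  move: hb; rewrite !inE => /andP [hb h].
  rewrite (_ : psi e b \in _); last by apply/imfsetP; exists b.
  by rewrite -/(inV e (capZ B P) b) inV_iff.
rewrite card_in_imfset //.
by move=> x y _ _; apply: psi_inj.
Qed.

Lemma card_diff : (#|` diffZ B P|)%:Z = (#|` B|)%:Z - (#|` capZ B P|)%:Z.
Proof.
have -> : diffZ B P = (B `\` capZ B P)%fset.
  by apply/fsetP => b; rewrite !inE; case: (b \in B); rewrite ?andbF ?andbT.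
have hs : (capZ B P `<=` B)%fset.
  by apply/fsubsetP => b; rewrite !inE => /andP [].
rewrite cardfsDS //.
have := fsubset_leq_card hs; lia.
Qed.

End Main.

End Helpers.
Import Helpers.

Theorem lemma23 (R : realType) (d : nat) (A C0 B0 : pt R -> Prop) (B : {fset pt R}) :
  (1 <= d)%N ->
  (forall x, B0 x -> A x /\ ~ C0 x) ->
  (forall b, b \in B -> A b) ->
  (#|` B|)%:Z = nb d - 3 ->
  dimFl (psis d B) = nb d - 4 ->
  (forall x, B0 x -> x \in B) ->
  (forall x, x \in B -> (C0 x <-> ~ B0 x)) ->
  (forall (e : nat) (D : {fset pt R}), inI d B C0 e D ->
     Num.max (tau d e B D) (mu d e B D) < nb d) ->
  (forall (e : nat) (D : {fset pt R}), (1 <= e <= d - 1)%N -> (D `<=` B)%fset ->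
     ~ inI d B C0 e D -> 0 <= alpha e D ->
     gamma e B D < nb d - nb (d - e) /\ beta d e B D < 0) ->
  Nd3 d A B0 C0 B.
Proof.
move=> hd hB0 hA hcard hdim hB0B hC0 hI hnI.
split => //; split => // e P he12 hP.
have he : (0 < e)%N by case/andP: he12.
have hsub : (capZ B P `<=` B)%fset.
  by apply/fsubsetP => b; rewrite !inE => /andP [].
have hg := gamma_eq B he hP.
have hBo := Bout_eq B he hP.
have hcd := card_diff B he hP.
have hal : 0 <= alpha e (capZ B P).
  have h := dim_hyper he hP (capZ B P).
  rewrite /alpha /psis.
  suff : dimFl [seq psi e x | x <- capZ B P] <= nb e - 2 by lia.
  apply: h => y hy.
  have : y \in capZ B P := hy.
  by rewrite !inE => /andP [_ /eqP].
have hdl := dimFl_le (psis (d - e) (diffZ B P)).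
rewrite size_psis in hdl.
have hbeta : beta d e B (capZ B P) = nb (d - e) - 3 - dimFl (psis (d - e) (diffZ B P)).
  by rewrite /beta hBo.
set c := (#|` capZ B P|)%:Z in hg hcd *.
set dv := dimFl (psis (d - e) (diffZ B P)) in hdl hbeta *.
set N := nb d in hcard hI hnI *.
set M := nb (d - e) in hbeta hnI *.
case: (classic (inI d B C0 e (capZ B P))) => hIn.
  have := hI e _ hIn; rewrite gt_max => /andP [htau hmu].
  move: hmu; rewrite /mu; have -> : (alpha e (capZ B P) < 0) = false by rewrite ltNge hal.
  rewrite hg -/M => hmu.
  have key : 0 <= beta d e B (capZ B P) -> c = N - M - 1 /\ beta d e B (capZ B P) = 0.
    move=> hb0; move: htau; rewrite /tau hg -/M.
    have -> : (Num.min (alpha e (capZ B P)) (beta d e B (capZ B P)) < 0) || (N - M - 1 < c) = false.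
      by rewrite gt_min; apply/negP => /orP [/orP [h|h]|h]; lia.
    case: eqP => h; lia.
  split.
  - lia.
  - move=> hc; have [_ hb] := key ltac:(lia); lia.
  - move=> hc; case: (ltP (M - 3) dv) => // hle.
    have [hc' _] := key ltac:(lia); lia.
have [hg' hb'] := hnI e _ he12 hsub hIn hal.
rewrite hg in hg'.
split.
- lia.
- move=> hc; lia.
- move=> hc; lia.
Qed.
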